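(* Let $\mathcal{H}$ be any undirected hypergraph on $\{1,2,3\}$ and consider any network dynamical system on $\mathcal{H}$ with one-dimensional node states, smooth $F$ and smooth edge-dependent coupling functions $G_e$. Then the system does not possess a Field cycle; i.e., there do not exist distinct $i,j\in\{1,2,3\}$ such that $\Delta$, $S_i$, $S_j$ are dynamically invariant and there are two distinct hyperbolic equilibria $\xi_1,\xi_2\in\Delta$, a heteroclinic trajectory from $\xi_1$ to $\xi_2$ contained in $S_i\setminus\Delta$, and a heteroclinic trajectory from $\xi_2$ to $\xi_1$ contained in $S_j\setminus\Delta$.
   Context: A directed hypergraph on $\mathcal{V}=\{1,\dots,N\}$ is a set $\mathcal{E}$ of hyperedges $e=(T(e),H(e))$ with nonempty tail $T(e)$ and head $H(e)$; it is undirected if every hyperedge has the form $(A,A)$. A network dynamical system on it is $\dot x_k = F(x_k) + \sum_{e\in\mathcal{E}:\,k\in H(e)} G_e(x_k; x_{T(e)})$ on $\mathbb{R}^N$, with $F:\mathbb R\to\mathbb R$ smooth and each $G_e:\mathbb{R}\times\mathbb{R}^{|T(e)|}\to\mathbb{R}$ smooth, invariant under permutations of its tail arguments and depending nontrivially on them. For $N=3$: $\Delta=\{x_1=x_2=x_3\}$, $S_1=\{x_2=x_3\}$, $S_2=\{x_1=x_3\}$, $S_3=\{x_1=x_2\}$ ($S_j$ is the set where all coordinates except $x_j$ coincide). A heteroclinic trajectory from $\xi$ to $\xi'$ is a solution $x(t)$, $t\in\mathbb R$, with $x(t)\to\xi$ as $t\to-\infty$ and $x(t)\to\xi'$ as $t\to+\infty$.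 An equilibrium is hyperbolic if its Jacobian has no eigenvalue with zero real part. *)

(* Defs.v *)
From HB Require Import structures.
From mathcomp Require Import all_boot all_order all_algebra.
From mathcomp Require Import all_classical all_reals all_analysis.
From mathcomp Require Import Rstruct Rstruct_topology.
From mathcomp Require Import perm.
From mathcomp Require complex.
Import complex.ComplexField.
From Stdlib Require Rdefinitions.
Notation R := Rdefinitions.R.
Set Implicit Arguments. Unset Strict Implicit. Unset Printing Implicit Defensive.
Import Order.TTheory GRing.Theory Num.Theory.
Import numFieldNormedType.Exports.
Local Open Scope classical_set_scope.
Local Open Scope ring_scope.

Definition unitv (n : nat) (i : 'I_n) : 'rV[R]_n := delta_mx 0 i.

Fixpoint Ck (k : nat) (n : nat) (f : 'rV[R]_n -> R^o) : Prop :=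
  match k with
  | 0 => continuous f
  | k'.+1 => (forall (x : 'rV[R]_n) (i : 'I_n), derivable f x (unitv i)) /\
             (forall i : 'I_n, Ck k' (fun x => 'D_(unitv i) f x))
  end.

Definition smooth (n : nat) (f : 'rV[R]_n -> R^o) : Prop := forall k, Ck k f.

Definition smooth1 (F : R -> R) : Prop := smooth (fun z : 'rV[R]_1 => F (z 0 0)).

Definition smooth2 (m : nat) (G : R -> 'rV[R]_m -> R) : Prop :=
  smooth (fun z : 'rV[R]_(1 + m) => G (lsubmx z 0 0) (rsubmx z)).

Definition tail_symmetric (m : nat) (G : R -> 'rV[R]_m -> R) : Prop :=
  forall (s : 'S_m) (y : R) (v : 'rV[R]_m),
    G y (\row_(j < m) v 0 (s j)) = G y v.

Definition tail_nontrivial (m : nat) (G : R -> 'rV[R]_m -> R) : Prop :=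
  exists (y : R) (v w : 'rV[R]_m), G y v <> G y w.

(* An undirected hypergraph on {1,2,3} (here 'I_3 = {0,1,2}) is a set E of
   hyperedges (A, A), represented by their (nonempty) vertex sets A.
   The coupling function of hyperedge A is G A : R -> R^{|A|} -> R. *)
Definition undirected_hypergraph (E : {set {set 'I_3}}) : Prop :=
  forall A, A \in E -> A != finset.set0.

(* tail state x_{T(e)} = x_A, listed along the enumeration of A *)
Definition tail_state (A : {set 'I_3}) (x : 'rV[R]_3) : 'rV[R]_#|A| :=
  \row_(j < #|A|) x 0 (enum_val j).

Definition netvf (E : {set {set 'I_3}}) (F : R -> R)
  (G : forall A : {set 'I_3}, R -> 'rV[R]_#|A| -> R) (x : 'rV[R]_3) : 'rV[R]_3 :=
  \row_(k < 3) (F (x 0 k) + \sum_(A in E | k \in A) G A (x 0 k) (tail_state A x)).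

Definition Delta (x : 'rV[R]_3) : Prop := x 0 0 = x 0 1 /\ x 0 1 = x 0 2.
Definition Ssub (i : 'I_3) (x : 'rV[R]_3) : Prop :=
  forall j k : 'I_3, j != i -> k != i -> x 0 j = x 0 k.

(* dynamical invariance of a (linear) subspace V under the vector field f *)
Definition dyn_invariant (f : 'rV[R]_3 -> 'rV[R]_3) (V : 'rV[R]_3 -> Prop) : Prop :=
  forall x, V x -> V (f x).

Definition equilibrium (f : 'rV[R]_3 -> 'rV[R]_3) (xi : 'rV[R]_3) : Prop := f xi = 0.

Definition jacobian (f : 'rV[R]_3 -> 'rV[R]_3) (xi : 'rV[R]_3) : 'M[R]_3 :=
  \matrix_(i < 3, j < 3) 'D_(unitv j) (fun x => f x 0 i : R^o) xi.

Definition hyperbolic (f : 'rV[R]_3 -> 'rV[R]_3) (xi : 'rV[R]_3) : Prop :=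
  forall lam : complex.complex R,
    eigenvalue (map_mx (fun r : R => complex.Complex r 0) (jacobian f xi)) lam ->
    complex.Re lam <> 0.

Definition heteroclinic_in (f : 'rV[R]_3 -> 'rV[R]_3) (xi xi' : 'rV[R]_3)
  (C : 'rV[R]_3 -> Prop) : Prop :=
  exists x : R^o -> 'rV[R]_3,
    (forall t : R^o, is_derive t 1 x (f (x t))) /\
    (x t @[t --> -oo] --> xi) /\
    (x t @[t --> +oo] --> xi') /\
    (forall t : R, C (x t)).

Definition field_cycle (f : 'rV[R]_3 -> 'rV[R]_3) : Prop :=
  exists (i j : 'I_3) (xi1 xi2 : 'rV[R]_3),
    i != j /\
    dyn_invariant f Delta /\ dyn_invariant f (Ssub i) /\ dyn_invariant f (Ssub j) /\
    xi1 <> xi2 /\ Delta xi1 /\ Delta xi2 /\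
    equilibrium f xi1 /\ hyperbolic f xi1 /\
    equilibrium f xi2 /\ hyperbolic f xi2 /\
    heteroclinic_in f xi1 xi2 (fun x => Ssub i x /\ ~ Delta x) /\
    heteroclinic_in f xi2 xi1 (fun x => Ssub j x /\ ~ Delta x).

(* Main.v *)
Require Import Defs.
From HB Require Import structures.
From mathcomp Require Import all_boot all_order all_algebra.
From mathcomp Require Import all_classical all_reals all_analysis.
From mathcomp Require Import Rstruct Rstruct_topology.
From mathcomp Require Import perm.
From mathcomp Require complex.
Import complex.ComplexField.
From mathcomp Require Import ring lra zify.
Set Implicit Arguments. Unset Strict Implicit. Unset Printing Implicit Defensive.
Import Order.TTheory GRing.Theory Num.Theory.
Import numFieldNormedType.Exports.
Local Open Scope classical_set_scope.
Local Open Scope ring_scope.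
Lemma quot_eq (V1 V2 : normedModType R) (f1 : V1 -> R^o) (f2 : V2 -> R^o) a1 v1 a2 v2 :
  (forall h : R, f1 (h *: v1 + a1) - f1 a1 = f2 (h *: v2 + a2) - f2 a2) ->
  (derivable f1 a1 v1 <-> derivable f2 a2 v2) /\ 'D_v1 f1 a1 = 'D_v2 f2 a2.
Proof.
move=> H.
have E : (fun h : R => h^-1 *: ((f1 \o shift a1) (h *: v1) - f1 a1)) =
         (fun h : R => h^-1 *: ((f2 \o shift a2) (h *: v2) - f2 a2)).
  by apply: funext => h /=; rewrite H.
by rewrite /derivable /derive E.
Qed.

Lemma line_eq (V : normedModType R) (g : V -> R^o) v a s :
  (derivable (fun s : R^o => g (s *: v + a)) s 1 <-> derivable g (s *: v + a) v) /\
  'D_1 (fun s : R^o => g (s *: v + a)) s = 'D_v g (s *: v + a).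
Proof.
apply: quot_eq => h.
by rewrite /= scaler1 scalerDl addrA.
Qed.

Lemma MVT2 (phi dphi : R^o -> R^o) :
  (forall s : R^o, is_derive s (1 : R^o) phi (dphi s)) -> forall a b : R,
  exists z, ((a <= z <= b) \/ (b <= z <= a)) /\ phi b - phi a = dphi z * (b - a).
Proof.
move=> D a b.
have cont : continuous phi.
  move=> s; apply: differentiable_continuous; apply/derivable1_diffP.
  by have [] := D s.
have [ab|ba] := leP a b.
  have [z zab E] := MVT_segment ab (fun x _ => D x) (continuous_subspaceT cont).
  exists z; split => //; left; by rewrite in_itv /= in zab.
have [z zab E] := MVT_segment (ltW ba) (fun x _ => D x) (continuous_subspaceT cont).
exists z; split; first by right; rewrite in_itv /= in zab.
by rewrite -[LHS]opprB E -mulrN opprB.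
Qed.
Definition C1 n (g : 'rV[R]_n -> R^o) :=
  (forall x i, derivable g x (unitv i)) /\ (forall i, continuous (fun x => 'D_(unitv i) g x)).

Lemma C1_step n (g : 'rV[R]_n -> R^o) (w : 'rV[R]_n) (Dw : 'rV[R]_n -> R) (p : 'I_n) (c : R) :
  C1 g -> (forall y, derivable g y w /\ 'D_w g y = Dw y) ->
  forall y, derivable g y (w + c *: unitv p) /\
            'D_(w + c *: unitv p) g y = Dw y + c * 'D_(unitv p) g y.
Proof.
move=> [gd gc] Hw y.
set e := unitv p.
set Dp := fun z => 'D_e g z.
pose Q1 := fun h : R => h^-1 *: (g (h *: (c *: e) + (h *: w + y)) - g (h *: w + y)).
pose Q2 := fun h : R => h^-1 *: (g (h *: w + y) - g y).
have QE : (fun h : R => h^-1 *: ((g \o shift y) (h *: (w + c *: e)) - g y)) = (fun h => Q1 h + Q2 h).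
  apply: funext => h /=; rewrite /Q1 /Q2 -scalerDr; congr (_ *: _).
  have -> : h *: (w + c *: e) + y = h *: (c *: e) + (h *: w + y).
    by rewrite scalerDr addrA (addrC (h *: w)).
  by rewrite [RHS]addrA subrK.
have Q2c : Q2 h @[h --> (0:R)^'] --> Dw y.
  by have [d <-] := Hw y; exact: d.
have Q1c : Q1 h @[h --> (0:R)^'] --> c * Dp y.
  apply/cvgrPdist_lt => eps eps0.
  have c0 : 0 < `|c| + 1 by rewrite ltr_pwDr // normr_ge0.
  have := gc p y => /cvgrPdist_lt /(_ (eps / (`|c| + 1))) /(_ (divr_gt0 eps0 c0)).
  move=> /nbhs_ballP [del /= del0 Hdel].
  set K := `|c| * `|e| + `|w| + 1.
  have K0 : 0 < K.
    by rewrite /K ltr_pwDr // addr_ge0 // ?mulr_ge0 // normr_ge0.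
  near=> h.
  have hn0 : h != 0 by near: h; exact: nbhs_dnbhs_neq.
  have hK : `|h| < del / K.
    near: h; apply: nbhs_dnbhs; apply/nbhs_ballP; exists (del / K); first exact: divr_gt0.
    by move=> t; rewrite /ball /= sub0r normrN.
  have Dphi : forall s : R^o, is_derive s (1 : R^o)
      (fun s : R^o => g (s *: e + (h *: w + y))) (Dp (s *: e + (h *: w + y))).
    move=> s; have [L1 L2] := line_eq g e (h *: w + y) s.
    by apply: DeriveDef; [apply/L1; exact: gd | exact: L2].
  have [z [zb E]] := MVT2 Dphi 0 (h * c).
  rewrite scale0r add0r subr0 in E.
  have -> : Q1 h = c * Dp (z *: e + (h *: w + y)).
    rewrite /Q1 scalerA E.
    change (h^-1 * (Dp (z *: e + (h *: w + y)) * (h * c)) = c * Dp (z *: e + (h *: w + y))).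
    by field.
  have zc : `|z| <= `|h| * `|c|.
    rewrite -normrM ler_norml.
    have h1 := ler_norm (h * c).
    have h2 : - `|h * c| <= h * c by rewrite lerNl -normrN ler_norm.
    by case: zb => /andP [z1 z2]; apply/andP; split; lra.
  have B : ball y del (z *: e + (h *: w + y)).
    rewrite -ball_normE /=.
    have -> : y - (z *: e + (h *: w + y)) = - (z *: e + h *: w).
      by rewrite [z *: e + _]addrA opprD addrCA subrr addr0.
    rewrite normrN; apply: (le_lt_trans (ler_normD _ _)); rewrite !normrZ.
    have e0 := normr_ge0 e; have w0 := normr_ge0 w; have hh := normr_ge0 h.
    have hK' : `|h| * K < del by rewrite -ltr_pdivlMr.
    have : `|z| * `|e| <= `|h| * `|c| * `|e| by apply: ler_wpM2r.
    rewrite /K in hK'; nra.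
  have := Hdel _ B => H1.
  rewrite /Dp -mulrBr normrM.
  have H2 : `|c| * (eps / (`|c| + 1)) < eps.
    rewrite mulrA ltr_pdivrMr //; nra.
  apply: le_lt_trans H2; apply: ler_wpM2l; [exact: normr_ge0 | exact: ltW].
have Qc : (fun h : R => h^-1 *: ((g \o shift y) (h *: (w + c *: e)) - g y)) @ (0:R)^'
          --> Dw y + c * Dp y.
  by rewrite QE addrC; apply: cvgD.
split; first by apply/cvg_ex; exists (Dw y + c * Dp y).
exact: cvg_lim Qc.
Unshelve. all: by end_near.
Qed.
Lemma C1_dir n (g : 'rV[R]_n -> R^o) : C1 g ->
  forall w y, derivable g y w /\ 'D_w g y = \sum_(q < n) w 0 q * 'D_(unitv q) g y.
Proof.
move=> Cg w.
pose wk k : 'rV[R]_n := \row_q (if (q < k)%N then w 0 q else 0).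
suff H : forall k y, derivable g y (wk k) /\
    'D_(wk k) g y = \sum_(q < n) wk k 0 q * 'D_(unitv q) g y.
  have -> : w = wk n by apply/rowP => q; rewrite /wk mxE ltn_ord.
  exact: H.
elim=> [|k IH] y.
  have -> : wk 0%N = 0 by apply/rowP => q; rewrite !mxE.
  split; first exact: derivable0.
  by rewrite derive0 big1 // => q _; rewrite mxE mul0r.
case: (ltnP k n) => kn; last first.
  have -> : wk k.+1 = wk k.
    apply/rowP => q; rewrite !mxE.
    have qk : (q < k)%N := leq_trans (ltn_ord q) kn.
    by rewrite qk ltnS ltnW.
  exact: IH.
pose p := Ordinal kn.
have Hq : forall q, wk k.+1 0 q = wk k 0 q + w 0 p * (q == p)%:R.
  move=> q; rewrite !mxE; case: (eqVneq q p) => [->|qp].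
    by rewrite /= ltnSn ltnn mulr1 add0r.
  have qk : (q : nat) != k.
    by apply: contra qp => /eqP h; apply/eqP/val_inj.
  by rewrite mulr0 addr0 ltnS leq_eqVlt (negbTE qk).
have -> : wk k.+1 = wk k + w 0 p *: unitv p.
  apply/rowP => q; rewrite Hq; move: (wk k) => W.
  by rewrite !mxE eqxx.
have [d E] := @C1_step n g (wk k) _ p (w 0 p) Cg IH y.
split; first exact: d.
rewrite E.
have -> : \sum_(q < n) (wk k + w 0 p *: unitv p) 0 q * 'D_(unitv q) g y =
          \sum_(q < n) (wk k 0 q * 'D_(unitv q) g y + w 0 p * (q == p)%:R * 'D_(unitv q) g y).
  apply: eq_bigr => q _.
  rewrite -mulrDl; congr (_ * _); move: (wk k) => W.
  by rewrite !mxE eqxx.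
rewrite big_split /=; congr (_ + _).
rewrite (bigD1 p) //= big1 ?addr0; first by rewrite eqxx mulr1.
by move=> q qp; rewrite (negbTE qp) mulr0 mul0r.
Qed.
Definition sel n (s : 'I_n -> 'I_3) (x : 'rV[R]_3) : 'rV[R]_n := \row_q x 0 (s q).

Lemma sel_lin n (s : 'I_n -> 'I_3) (h : R) v a : sel s (h *: v + a) = h *: sel s v + sel s a.
Proof. by apply/rowP => q; rewrite !mxE. Qed.

Lemma sel_cont n (s : 'I_n -> 'I_3) : continuous (sel s).
Proof.
move=> x A /nbhs_ballP [e e0 eA]; apply/nbhs_ballP; exists e => // y [_ Bxy].
apply: eA; split => // i j; rewrite !mxE; exact: Bxy.
Qed.

Lemma cont_sumf (T : topologicalType) (I : Type) (r : seq I) (P : pred I)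
  (F : I -> T -> R^o) : (forall i, continuous (F i)) ->
  continuous (fun x => \sum_(i <- r | P i) F i x).
Proof.
move=> Fc; elim: r => [|a r IH].
  have -> : (fun x => \sum_(i <- [::] | P i) F i x) = fun _ => 0.
    by apply: funext => x; rewrite big_nil.
  exact: cst_continuous.
have -> : (fun x => \sum_(i <- a :: r | P i) F i x) =
    fun x => (if P a then F a x else 0) + \sum_(i <- r | P i) F i x.
  by apply: funext => x; rewrite big_cons; case: (P a); rewrite ?add0r.
move=> x; apply: continuousD; last exact: IH.
case: (P a); [exact: Fc | exact: cst_continuous].
Qed.

Lemma C1_sel n s (g : 'rV[R]_n -> R^o) : C1 g -> C1 (fun x => g (sel s x)).
Proof.
move=> Cg; have [gd gc] := Cg.
have key : forall x i, derivable (fun x => g (sel s x)) x (unitv i) /\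
    'D_(unitv i) (fun x => g (sel s x)) x =
    \sum_q (sel s (unitv i)) 0 q * 'D_(unitv q) g (sel s x).
  move=> x i.
  have [E1 E2] := @quot_eq _ _ (fun x => g (sel s x)) g x (unitv i) (sel s x)
     (sel s (unitv i)) (fun h => ltac:(by rewrite /= sel_lin)).
  have [d D] := C1_dir Cg (sel s (unitv i)) (sel s x).
  by split; [apply/E1 | rewrite E2].
split; first by move=> x i; case: (key x i).
move=> i.
have -> : (fun x => 'D_(unitv i) (fun x => g (sel s x)) x) =
    fun x => \sum_q (sel s (unitv i)) 0 q * 'D_(unitv q) g (sel s x).
  by apply: funext => x; case: (key x i).
apply: (@cont_sumf _ _ _ xpredT (fun q x => (sel s (unitv i)) 0 q * 'D_(unitv q) g (sel s x))) => q.
move=> x; apply: (@continuousZ _ R^o _ (fun _ => (sel s (unitv i)) 0 q) (fun x => 'D_(unitv q) g (sel s x)) x); first exact: cst_continuous.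
have := @continuous_comp _ _ _ (sel s) (fun y => 'D_(unitv q) g y) x (@sel_cont _ s x) (gc q (sel s x)); exact.
Qed.

Lemma C1_add n (f g : 'rV[R]_n -> R^o) : C1 f -> C1 g -> C1 (fun x => f x + g x).
Proof.
move=> [fd fc] [gd gc]; split.
  by move=> x i; exact: derivableD.
move=> i.
have -> : (fun x => 'D_(unitv i) (fun x => f x + g x) x) =
    fun x => 'D_(unitv i) f x + 'D_(unitv i) g x.
  by apply: funext => x; rewrite (deriveD (fd x i) (gd x i)).
move=> x; exact: (@continuousD _ R^o _ (fun x => 'D_(unitv i) f x) (fun x => 'D_(unitv i) g x) x (fc i x) (gc i x)).
Qed.

Lemma C1_cst n (c : R) : C1 (fun _ : 'rV[R]_n => (c : R^o)).
Proof.
split; first by move=> x i; exact: derivable_cst.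
move=> i.
have -> : (fun x => 'D_(unitv i) (fun _ : 'rV[R]_n => (c : R^o)) x) = fun _ => 0.
  by apply: funext => x; rewrite derive_cst.
exact: cst_continuous.
Qed.

Lemma C1_sum n (I : Type) (r : seq I) (P : pred I) (F : I -> 'rV[R]_n -> R^o) :
  (forall i, P i -> C1 (F i)) -> C1 (fun x => \sum_(i <- r | P i) F i x).
Proof.
move=> FC; elim: r => [|a r IH].
  have -> : (fun x => \sum_(i <- [::] | P i) F i x) = fun _ => 0.
    by apply: funext => x; rewrite big_nil.
  exact: C1_cst.
have -> : (fun x => \sum_(i <- a :: r | P i) F i x) =
    fun x => (if P a then F a x else 0) + \sum_(i <- r | P i) F i x.
  by apply: funext => x; rewrite big_cons; case: (P a); rewrite ?add0r.
apply: C1_add => //; case Pa: (P a); [exact: FC | exact: C1_cst].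
Qed.

Definition sig3 (A : {set 'I_3}) (l : 'I_3) (q : 'I_(1 + #|A|)%N) : 'I_3 :=
  match fintype.split q with inl _ => l | inr j => enum_val j end.

Lemma C1_netvf (E : {set {set 'I_3}}) (F : R -> R) (G : forall A : {set 'I_3}, R -> 'rV[R]_#|A| -> R) (l : 'I_3) : smooth1 F -> (forall A, A \in E -> smooth2 (G A)) ->
  C1 (fun x => netvf E F G x 0 l).
Proof.
move=> HF HG.
have -> : (fun x => netvf E F G x 0 l) = fun x =>
   (fun z : 'rV[R]_1 => (F (z 0 0) : R^o)) (sel (fun _ => l) x) +
   \sum_(A in E | l \in A)
     (fun z : 'rV[R]_(1 + #|A|)%N => (G A (lsubmx z 0 0) (rsubmx z) : R^o)) (sel (sig3 l) x).
  apply: funext => x; rewrite /netvf mxE; congr (_ + _); first by rewrite mxE.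
  apply: eq_bigr => A _ /=; congr (G A _ _).
    rewrite !mxE /sig3; case: splitP => //= k; by [].
  apply/rowP => j; rewrite !mxE /sig3; case: splitP => [k /= Hk|k /= Hk].
    by have := ltn_ord k; rewrite -Hk.
  by congr (x 0 (enum_val _)); apply: val_inj; move: Hk => /= /eqP; rewrite eqn_add2l => /eqP.
apply: C1_add; first exact: (C1_sel _ (HF 1%N)).
apply: C1_sum => A /andP [AE _].
exact: (C1_sel _ (HG A AE 1%N)).
Qed.
Lemma all3 (i j k m : 'I_3) : i != j -> j != k -> i != k -> [\/ m = i, m = j | m = k].
Proof.
move=> nij njk nik.
case: (eqVneq m i) => [->|nmi]; first by constructor 1.
case: (eqVneq m j) => [->|nmj]; first by constructor 2.
case: (eqVneq m k) => [->|nmk]; first by constructor 3.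
exfalso; move: nij njk nik nmi nmj nmk; rewrite -!(inj_eq val_inj) /=.
have := ltn_ord i; have := ltn_ord j; have := ltn_ord k; have := ltn_ord m.
move: (val i) (val j) (val k) (val m) => a b c d; lia.
Qed.

Notation Gty := (forall A : {set 'I_3}, R -> 'rV[R]_#|A| -> R).

Definition Tm (G : forall A : {set 'I_3}, R -> 'rV[R]_#|A| -> R) (l : 'I_3)
  (A : {set 'I_3}) (x : 'rV[R]_3) : R :=
  if l \in A then G A (x 0 l) (tail_state A x) else 0.

Lemma netvfE (E : {set {set 'I_3}}) (F : R -> R)
  (G : forall A : {set 'I_3}, R -> 'rV[R]_#|A| -> R) x l :
  netvf E F G x 0 l = F (x 0 l) + \sum_(A in E) Tm G l A x.
Proof. by rewrite mxE big_mkcondr. Qed.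

Lemma Tm0 (G : Gty) (l : 'I_3) (A : {set 'I_3}) (x : 'rV[R]_3) : l \notin A -> Tm G l A x = 0.
Proof. by rewrite /Tm => /negbTE ->. Qed.

Lemma Tag (G : Gty) (l : 'I_3) (A : {set 'I_3}) (x y : 'rV[R]_3) : (forall m, m \in A -> x 0 m = y 0 m) -> Tm G l A x = Tm G l A y.
Proof.
move=> H; rewrite /Tm; case: ifP => lA //; congr (G A _ _); first exact: H.
by apply/rowP => j; rewrite !mxE; apply: H; exact: enum_valP.
Qed.

Lemma Tsw (G : Gty) (l : 'I_3) (A : {set 'I_3}) (x y : 'rV[R]_3) (a b : 'I_3) : tail_symmetric (G A) -> (a \in A) = (b \in A) ->
  (forall m, y 0 m = x 0 (tperm a b m)) -> Tm G l A y = Tm G (tperm a b l) A x.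
Proof.
move=> TS ab Hy; rewrite /Tm.
have memE : forall m, (tperm a b m \in A) = (m \in A).
  by move=> m; case: tpermP => [->|->|_ _] //; rewrite ab.
rewrite memE; case lA: (l \in A) => //.
rewrite Hy.
pose s := fun j : 'I_#|A| => enum_rank_in lA (tperm a b (enum_val j)).
have sinj : injective s.
  move=> j1 j2 /(congr1 enum_val); rewrite /s !enum_rankK_in ?memE ?enum_valP //.
  by move/perm_inj/enum_val_inj.
rewrite -[RHS](TS (perm sinj)); congr (G A _ _); apply/rowP => j.
by rewrite !mxE permE /s enum_rankK_in ?memE ?enum_valP // Hy.
Qed.

Definition pt (m : 'I_3) (u v : R) : 'rV[R]_3 := \row_q (if q == m then u else v).
Lemma I2edge (G : Gty) (A : {set 'I_3}) (i j k : 'I_3) (u v : R) :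
  tail_symmetric (G A) -> i != j -> j != k -> i != k ->
  Tm G i A (pt k v u) - Tm G j A (pt k v u) - Tm G i A (pt j v u) + Tm G k A (pt j v u)
  + Tm G j A (pt i v u) - Tm G k A (pt i v u) = 0.
Proof.
move=> TS nij njk nik.
have nji : j != i by rewrite eq_sym.
have nkj : k != j by rewrite eq_sym.
have nki : k != i by rewrite eq_sym.
have e1 := negbTE nij; have e2 := negbTE nji; have e3 := negbTE njk.
have e4 := negbTE nkj; have e5 := negbTE nik; have e6 := negbTE nki.
set q := pt k v u; set r := pt j v u; set s := pt i v u.
have Fijq : (i \in A) = (j \in A) -> Tm G i A q = Tm G j A q.
  move=> h; rewrite (@Tsw G i A q q i j TS h) ?tpermL // => m.
  by case: (all3 m nij njk nik) => ->; rewrite !mxE ?tpermL ?tpermR ?tpermD // ?eqxx ?e1 ?e2 ?e3 ?e4 ?e5 ?e6.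
have Fikr : (i \in A) = (k \in A) -> Tm G i A r = Tm G k A r.
  move=> h; rewrite (@Tsw G i A r r i k TS h) ?tpermL // => m.
  by case: (all3 m nij njk nik) => ->; rewrite !mxE ?tpermL ?tpermR ?tpermD // ?eqxx ?e1 ?e2 ?e3 ?e4 ?e5 ?e6.
have Fjks : (j \in A) = (k \in A) -> Tm G j A s = Tm G k A s.
  move=> h; rewrite (@Tsw G j A s s j k TS h) ?tpermL // => m.
  by case: (all3 m nij njk nik) => ->; rewrite !mxE ?tpermL ?tpermR ?tpermD // ?eqxx ?e1 ?e2 ?e3 ?e4 ?e5 ?e6.
have Sij : (i \in A) = (j \in A) -> Tm G j A s = Tm G i A r.
  move=> h; rewrite (@Tsw G j A r s i j TS h) ?tpermR // => m.
  by case: (all3 m nij njk nik) => ->; rewrite !mxE ?tpermL ?tpermR ?tpermD // ?eqxx ?e1 ?e2 ?e3 ?e4 ?e5 ?e6.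
have Sik : (i \in A) = (k \in A) -> Tm G k A s = Tm G i A q.
  move=> h; rewrite (@Tsw G k A q s i k TS h) ?tpermR // => m.
  by case: (all3 m nij njk nik) => ->; rewrite !mxE ?tpermL ?tpermR ?tpermD // ?eqxx ?e1 ?e2 ?e3 ?e4 ?e5 ?e6.
have Sjk : (j \in A) = (k \in A) -> Tm G k A r = Tm G j A q.
  move=> h; rewrite (@Tsw G k A q r j k TS h) ?tpermR // => m.
  by case: (all3 m nij njk nik) => ->; rewrite !mxE ?tpermL ?tpermR ?tpermD // ?eqxx ?e1 ?e2 ?e3 ?e4 ?e5 ?e6.
have mem : forall m, m \in A -> [\/ m = i, m = j | m = k] by move=> m _; exact: all3.
case Ai: (i \in A); case Aj: (j \in A); case Ak: (k \in A).
- rewrite Fijq ?Ai ?Aj // Fikr ?Ai ?Ak // Fjks ?Aj ?Ak //; lra.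
- rewrite Fijq ?Ai ?Aj // Sij ?Ai ?Aj // !(@Tm0 G k) ?Ak //; lra.
- rewrite Fikr ?Ai ?Ak // Sik ?Ai ?Ak // !(@Tm0 G j) ?Aj //; lra.
- rewrite !(@Tm0 G j) ?Aj // !(@Tm0 G k) ?Ak // (@Tag G i A q r); first lra.
  move=> m mA; case: (mem m mA) => Hm; subst m; rewrite ?Aj ?Ak // in mA.
  by rewrite !mxE ?eqxx ?e1 ?e2 ?e3 ?e4 ?e5 ?e6.
- rewrite Fjks ?Aj ?Ak // Sjk ?Aj ?Ak // !(@Tm0 G i) ?Ai //; lra.
- rewrite !(@Tm0 G i) ?Ai // !(@Tm0 G k) ?Ak // (@Tag G j A q s); first lra.
  move=> m mA; case: (mem m mA) => Hm; subst m; rewrite ?Ai ?Ak // in mA.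
  by rewrite !mxE ?eqxx ?e1 ?e2 ?e3 ?e4 ?e5 ?e6.
- rewrite !(@Tm0 G i) ?Ai // !(@Tm0 G j) ?Aj // (@Tag G k A r s); first lra.
  move=> m mA; case: (mem m mA) => Hm; subst m; rewrite ?Ai ?Aj // in mA.
  by rewrite !mxE ?eqxx ?e1 ?e2 ?e3 ?e4 ?e5 ?e6.
- rewrite !(@Tm0 G i) ?Ai // !(@Tm0 G j) ?Aj // !(@Tm0 G k) ?Ak //; lra.
Qed.
Lemma I3edge (G : Gty) (A : {set 'I_3}) (i j k : 'I_3) (u v : R) :
  tail_symmetric (G A) -> i != j -> j != k -> i != k ->
  Tm G i A (pt i u v) - Tm G j A (pt i u v) - Tm G j A (pt j u v) + Tm G i A (pt j u v)
  - Tm G i A (pt k v u) + Tm G j A (pt k v u) - Tm G i A (pt i v v) + Tm G j A (pt i v v) = 0.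
Proof.
move=> TS nij njk nik.
have nji : j != i by rewrite eq_sym.
have nkj : k != j by rewrite eq_sym.
have nki : k != i by rewrite eq_sym.
have e1 := negbTE nij; have e2 := negbTE nji; have e3 := negbTE njk.
have e4 := negbTE nkj; have e5 := negbTE nik; have e6 := negbTE nki.
set P := pt i u v; set Q := pt j u v; set q := pt k v u; set D := pt i v v.
have mem : forall m, m \in A -> [\/ m = i, m = j | m = k] by move=> m _; exact: all3.
have SQP1 : (i \in A) = (j \in A) -> Tm G j A Q = Tm G i A P.
  move=> h; rewrite (@Tsw G j A P Q i j TS h) ?tpermR // => m.
  by case: (all3 m nij njk nik) => ->; rewrite !mxE ?tpermL ?tpermR ?tpermD // ?eqxx ?e1 ?e2 ?e3 ?e4 ?e5 ?e6.
have SQP2 : (i \in A) = (j \in A) -> Tm G i A Q = Tm G j A P.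
  move=> h; rewrite (@Tsw G i A P Q i j TS h) ?tpermL // => m.
  by case: (all3 m nij njk nik) => ->; rewrite !mxE ?tpermL ?tpermR ?tpermD // ?eqxx ?e1 ?e2 ?e3 ?e4 ?e5 ?e6.
have Sq : (i \in A) = (j \in A) -> Tm G i A q = Tm G j A q.
  move=> h; rewrite (@Tsw G i A q q i j TS h) ?tpermL // => m.
  by case: (all3 m nij njk nik) => ->; rewrite !mxE ?tpermL ?tpermR ?tpermD // ?eqxx ?e1 ?e2 ?e3 ?e4 ?e5 ?e6.
have SD : (i \in A) = (j \in A) -> Tm G i A D = Tm G j A D.
  move=> h; rewrite (@Tsw G i A D D i j TS h) ?tpermL // => m.
  by case: (all3 m nij njk nik) => ->; rewrite !mxE ?tpermL ?tpermR ?tpermD // ?eqxx ?e1 ?e2 ?e3 ?e4 ?e5 ?e6.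
case Ai: (i \in A); case Aj: (j \in A).
- rewrite SQP1 ?Ai ?Aj // SQP2 ?Ai ?Aj // Sq ?Ai ?Aj // SD ?Ai ?Aj //; lra.
- rewrite !(@Tm0 G j) ?Aj // (@Tag G i A P q) ?(@Tag G i A Q D); first lra.
  + move=> m mA; case: (mem m mA) => Hm; subst m; rewrite ?Aj // in mA;
    by rewrite !mxE ?eqxx ?e1 ?e2 ?e3 ?e4 ?e5 ?e6.
  + move=> m mA; case: (mem m mA) => Hm; subst m; rewrite ?Aj // in mA;
    by rewrite !mxE ?eqxx ?e1 ?e2 ?e3 ?e4 ?e5 ?e6.
- rewrite !(@Tm0 G i) ?Ai // (@Tag G j A P D) ?(@Tag G j A Q q); first lra.
  + move=> m mA; case: (mem m mA) => Hm; subst m; rewrite ?Ai // in mA;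
    by rewrite !mxE ?eqxx ?e1 ?e2 ?e3 ?e4 ?e5 ?e6.
  + move=> m mA; case: (mem m mA) => Hm; subst m; rewrite ?Ai // in mA;
    by rewrite !mxE ?eqxx ?e1 ?e2 ?e3 ?e4 ?e5 ?e6.
- rewrite !(@Tm0 G i) ?Ai // !(@Tm0 G j) ?Aj //; lra.
Qed.

Lemma I2f (E : {set {set 'I_3}}) (F : R -> R) (G : Gty) (i j k : 'I_3) (u v : R) :
  (forall A, A \in E -> tail_symmetric (G A)) -> i != j -> j != k -> i != k ->
  netvf E F G (pt k v u) 0 i - netvf E F G (pt k v u) 0 j
  - netvf E F G (pt j v u) 0 i + netvf E F G (pt j v u) 0 k
  + netvf E F G (pt i v u) 0 j - netvf E F G (pt i v u) 0 k = 0.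
Proof.
move=> TS nij njk nik.
have nji : j != i by rewrite eq_sym.
have nkj : k != j by rewrite eq_sym.
have nki : k != i by rewrite eq_sym.
have e1 := negbTE nij; have e2 := negbTE nji; have e3 := negbTE njk.
have e4 := negbTE nkj; have e5 := negbTE nik; have e6 := negbTE nki.
have H : \sum_(A in E) (Tm G i A (pt k v u) - Tm G j A (pt k v u) - Tm G i A (pt j v u)
   + Tm G k A (pt j v u) + Tm G j A (pt i v u) - Tm G k A (pt i v u)) = 0.
  apply: big1 => A AE; apply: (@I2edge G A i j k u v (TS A AE) nij njk nik).
rewrite !(sumrB, big_split) /= in H.
rewrite !netvfE !mxE ?eqxx ?e1 ?e2 ?e3 ?e4 ?e5 ?e6; lra.
Qed.

Lemma I3f (E : {set {set 'I_3}}) (F : R -> R) (G : Gty) (i j k : 'I_3) (u v : R) :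
  (forall A, A \in E -> tail_symmetric (G A)) -> i != j -> j != k -> i != k ->
  netvf E F G (pt i u v) 0 i - netvf E F G (pt i u v) 0 j
  - netvf E F G (pt j u v) 0 j + netvf E F G (pt j u v) 0 i
  - netvf E F G (pt k v u) 0 i + netvf E F G (pt k v u) 0 j
  - netvf E F G (pt i v v) 0 i + netvf E F G (pt i v v) 0 j = 0.
Proof.
move=> TS nij njk nik.
have nji : j != i by rewrite eq_sym.
have nkj : k != j by rewrite eq_sym.
have nki : k != i by rewrite eq_sym.
have e1 := negbTE nij; have e2 := negbTE nji; have e3 := negbTE njk.
have e4 := negbTE nkj; have e5 := negbTE nik; have e6 := negbTE nki.
have H : \sum_(A in E) (Tm G i A (pt i u v) - Tm G j A (pt i u v) - Tm G j A (pt j u v)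
   + Tm G i A (pt j u v) - Tm G i A (pt k v u) + Tm G j A (pt k v u)
   - Tm G i A (pt i v v) + Tm G j A (pt i v v)) = 0.
  by apply: big1 => A AE; apply: (@I3edge G A i j k u v (TS A AE) nij njk nik).
rewrite !(sumrB, big_split) /= in H.
rewrite !netvfE !mxE ?eqxx ?e1 ?e2 ?e3 ?e4 ?e5 ?e6; lra.
Qed.
Lemma is_derive_coord (x : R^o -> 'rV[R]_3) (t : R^o) (v : 'rV[R]_3) (m : 'I_3) :
  is_derive t (1 : R^o) x v -> is_derive t (1 : R^o) (fun s => (x s 0 m : R^o)) (v 0 m).
Proof.
move=> [dx Dx].
have Q : (fun h : R => h^-1 *: ((x \o shift t) (h *: (1:R^o)) - x t)) @ (0:R)^' --> v.
  by rewrite -Dx; exact: dx.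
have Qm : (fun h : R => ((h^-1 *: ((x \o shift t) (h *: (1:R^o)) - x t)) 0 m : R^o)) @ (0:R)^' --> (v 0 m : R^o).
  apply: (cvg_comp _ (fun M : 'rV[R]_3 => M 0 m) Q); exact: coord_continuous.
have E : (fun h : R => h^-1 *: (((fun s => (x s 0 m : R^o)) \o shift t) (h *: (1:R^o)) - x t 0 m)) =
         (fun h : R => (h^-1 *: ((x \o shift t) (h *: (1:R^o)) - x t)) 0 m).
  by apply: funext => h; rewrite !mxE.
apply: DeriveDef; first by rewrite /derivable E; apply/cvg_ex; exists (v 0 m); exact: Qm.
by rewrite /derive E; apply: cvg_lim.
Qed.

Lemma pt_Ssub (m : 'I_3) (u v : R) : Ssub m (pt m u v).
Proof. by move=> p q pm qm; rewrite !mxE (negbTE pm) (negbTE qm). Qed.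

Lemma pt_Delta (m : 'I_3) (v : R) : Delta (pt m v v).
Proof. by rewrite /Delta !mxE !if_same. Qed.

Lemma Delta_all (x : 'rV[R]_3) : Delta x -> forall m, x 0 m = x 0 0.
Proof.
move=> [h1 h2] [[|[|[|//]]] Hm].
- by congr (x 0 _); apply: val_inj.
- by have -> : Ordinal Hm = (1 : 'I_3) by apply: val_inj.
- have -> : Ordinal Hm = (2%:R : 'I_3) by apply: val_inj.
  by rewrite -h2 -h1.
Qed.

Lemma ballP3 (xi y : 'rV[R]_3) (del : R) :
  ball xi del y <-> (0 < del /\ forall m, `|xi 0 m - y 0 m| < del).
Proof.
split.
  by move=> [d0 H]; split => // m; have := H 0 m.
move=> [d0 H]; split => // p q; rewrite (ord1 p); exact: H.
Qed.
Lemma local_mvt (f : 'rV[R]_3 -> 'rV[R]_3) (i j : 'I_3) : i != j ->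
  C1 (fun x => (f x 0 i : R^o)) -> C1 (fun x => (f x 0 j : R^o)) ->
  (forall x, Delta x -> f x 0 i = f x 0 j) ->
  forall y, Ssub i y -> exists z : 'rV[R]_3,
    (forall (c del : R), (forall m, `|c - y 0 m| < del) -> forall m, `|c - z 0 m| < del) /\
    f y 0 i - f y 0 j = ('D_(unitv i) (fun x => (f x 0 i : R^o)) z
                        - 'D_(unitv i) (fun x => (f x 0 j : R^o)) z) * (y 0 i - y 0 j).
Proof.
move=> nij [di ci] [dj cj] HD y Sy.
set b := y 0 j; set P := pt i b b; set d := y 0 i - b.
set Phi := fun x : 'rV[R]_3 => (f x 0 i : R^o) - f x 0 j.
have Dphi : forall s : R^o, is_derive s (1:R^o) (fun s : R^o => Phi (s *: unitv i + P))
   ('D_(unitv i) (fun x => (f x 0 i : R^o)) (s *: unitv i + P)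
    - 'D_(unitv i) (fun x => (f x 0 j : R^o)) (s *: unitv i + P)).
  move=> s; have [L1 L2] := line_eq Phi (unitv i) P s.
  have dP : derivable Phi (s *: unitv i + P) (unitv i) by apply: derivableB.
  apply: DeriveDef; first exact/L1.
  by rewrite L2 /Phi deriveB.
have [z [zb E]] := MVT2 Dphi 0 d.
have yE : d *: unitv i + P = y.
  apply/rowP => m; rewrite !mxE if_same ?eqxx /=; case: (eqVneq m i) => [->|mi].
    by rewrite /d mulr1 subrK.
  rewrite mulr0 add0r /b; apply: Sy => //; by rewrite eq_sym.
have P0 : Phi P = 0 by rewrite /Phi HD ?subrr //; exact: pt_Delta.
rewrite yE scale0r add0r P0 !subr0 in E.
exists (z *: unitv i + P); split; last exact: E.
move=> c del H m.
have Hb := H j; have Hi := H i.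
rewrite !mxE if_same ?eqxx /=; case: (eqVneq m i) => [_|mi]; last first.
  by rewrite mulr0 add0r.
rewrite mulr1.
move: Hb Hi; rewrite /d in zb; rewrite -/b.
rewrite !ltr_norml => /andP[? ?] /andP[? ?]; apply/andP; split; case: zb => /andP[? ?]; lra.
Qed.
Lemma loc_neg (h : 'rV[R]_3 -> R^o) (xi : 'rV[R]_3) :
  {for xi, continuous h} -> h xi < 0 ->
  exists2 del, 0 < del & forall y, ball xi del y -> h y < 0.
Proof.
move=> hc hn; have : nbhs xi (fun y => h y < 0) by exact: (@cvgr_lt _ _ _ _ h (h xi) hc 0 hn).
by move/nbhs_ballP => [del del0 H]; exists del.
Qed.

Lemma loc_pos (h : 'rV[R]_3 -> R^o) (xi : 'rV[R]_3) :
  {for xi, continuous h} -> 0 < h xi ->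
  exists2 del, 0 < del & forall y, ball xi del y -> 0 < h y.
Proof.
move=> hc hn; have : nbhs xi (fun y => 0 < h y) by exact: (@cvgr_gt _ _ _ _ h (h xi) hc 0 hn).
by move/nbhs_ballP => [del del0 H]; exists del.
Qed.

Lemma all_Delta (y : 'rV[R]_3) (c : R) : (forall m, y 0 m = c) -> Delta y.
Proof. by move=> H; rewrite /Delta !H. Qed.

Lemma traj_facts (f : 'rV[R]_3 -> 'rV[R]_3) (i j : 'I_3) (xi : 'rV[R]_3) (a : R)
  (x : R^o -> 'rV[R]_3) :
  i != j -> C1 (fun x => (f x 0 i : R^o)) -> C1 (fun x => (f x 0 j : R^o)) ->
  (forall x, Delta x -> f x 0 i = f x 0 j) ->
  (forall m, xi 0 m = a) ->
  (forall t : R^o, is_derive t (1:R^o) x (f (x t))) ->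
  (forall t, Ssub i (x t) /\ ~ Delta (x t)) ->
  let d := fun t : R^o => (x t 0 i : R^o) - x t 0 j in
  let dd := fun t : R^o => (f (x t) 0 i : R^o) - f (x t) 0 j in
  [/\ forall t, is_derive t (1:R^o) (fun s => d s * d s) (d t * dd t + d t * dd t),
      forall t, d t != 0,
      forall del t, ball xi del (x t) -> exists z, ball xi del z /\
         dd t = ('D_(unitv i) (fun x => (f x 0 i : R^o)) z
                  - 'D_(unitv i) (fun x => (f x 0 j : R^o)) z) * d t &
      forall eta t, ball xi eta (x t) -> `|d t| < eta *+ 2].
Proof.
move=> nij Ci Cj HD Hxi Hx HS d dd.
have Hd : forall t, is_derive t (1:R^o) d (dd t).
  move=> t; apply: is_deriveB; exact: is_derive_coord.
split.
- move=> t; have := is_deriveM (Hd t) (Hd t); exact.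
- move=> t; apply/negP => /eqP dt0.
  have [S nD] := HS t; apply: nD; apply: (@all_Delta _ (x t 0 j)) => m.
  case: (eqVneq m i) => [->|mi]; first by apply/eqP; rewrite -subr_eq0; apply/eqP.
  by apply: S => //; rewrite eq_sym.
- move=> del t Bt.
  have [z [zb E]] := local_mvt nij Ci Cj HD (HS t).1.
  exists z; split; last exact: E.
  move/ballP3: Bt => [del0 Bt]; apply/ballP3; split => // m.
  rewrite Hxi; apply: zb => m'; rewrite -(Hxi m'); exact: Bt.
- move=> eta t /ballP3 [_ Bt].
  have Bi := Bt i; have Bj := Bt j; rewrite !Hxi in Bi Bj.
  move: Bi Bj; rewrite /d !ltr_norml => /andP[? ?] /andP[? ?].
  apply/andP; split; lra.
Qed.
Lemma dyn_inf (f : 'rV[R]_3 -> 'rV[R]_3) (i j : 'I_3) (xi : 'rV[R]_3) (a : R)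
  (x : R^o -> 'rV[R]_3) :
  i != j -> C1 (fun x => (f x 0 i : R^o)) -> C1 (fun x => (f x 0 j : R^o)) ->
  (forall x, Delta x -> f x 0 i = f x 0 j) ->
  (forall m, xi 0 m = a) ->
  (forall t : R^o, is_derive t (1:R^o) x (f (x t))) ->
  (forall t, Ssub i (x t) /\ ~ Delta (x t)) ->
  (x t @[t --> -oo] --> xi ->
   0 <= 'D_(unitv i) (fun x => (f x 0 i : R^o)) xi - 'D_(unitv i) (fun x => (f x 0 j : R^o)) xi) /\
  (x t @[t --> +oo] --> xi ->
   'D_(unitv i) (fun x => (f x 0 i : R^o)) xi - 'D_(unitv i) (fun x => (f x 0 j : R^o)) xi <= 0).
Proof.
move=> nij Ci Cj HD Hxi Hx HS.
move: (traj_facts nij Ci Cj HD Hxi Hx HS) => /= [Hg dn0 Hloc Hsmall].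
have Dc : {for xi, continuous (fun y => 'D_(unitv i) (fun x => (f x 0 i : R^o)) y
                                      - 'D_(unitv i) (fun x => (f x 0 j : R^o)) y)}.
  exact: continuousB (Ci.2 i xi) (Cj.2 i xi).
have sq : forall t, 0 < (x t 0 i - x t 0 j) * (x t 0 i - x t 0 j).
  by move=> t; rewrite -expr2 exprn_even_gt0 //= dn0 orbT.
have fin : forall t T : R, `|x t 0 i - x t 0 j| < (`|x T 0 i - x T 0 j| / 2) *+ 2 ->
    (x T 0 i - x T 0 j) * (x T 0 i - x T 0 j) <= (x t 0 i - x t 0 j) * (x t 0 i - x t 0 j) -> False.
  move=> t T; rewrite mulr2n -splitr => h2 h1.
  have n1 := normr_ge0 (x t 0 i - x t 0 j).
  have k1 := real_normK (num_real (x t 0 i - x t 0 j)).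
  have k2 := real_normK (num_real (x T 0 i - x T 0 j)).
  rewrite !expr2 in k1 k2; nra.
split=> Hc.
- rewrite leNgt; apply/negP => Dneg.
  have [del del0 Hdel] := loc_neg Dc Dneg.
  have [M [_ HM]] := Hc _ (nbhsx_ballx xi del del0).
  have dneg : forall t, t < M ->
      (x t 0 i - x t 0 j) * (f (x t) 0 i - f (x t) 0 j) < 0.
    move=> t tM; have [z [Bz E]] := Hloc del t (HM t tM).
    have Dz := Hdel z Bz; have := sq t; rewrite E; nra.
  pose T := M - 1.
  have gmono : forall t, t <= T -> (x T 0 i - x T 0 j) * (x T 0 i - x T 0 j)
                                <= (x t 0 i - x t 0 j) * (x t 0 i - x t 0 j).
    move=> t tT; have [z [zb E]] := MVT2 Hg t T.
    have zM : z < M by move: zb tT; rewrite /T; case=> /andP [? ?] ?; lra.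
    have := dneg z zM; move: E => /= E; nra.
  have eta0 : 0 < `|x T 0 i - x T 0 j| / 2 by rewrite divr_gt0 // normr_gt0 dn0.
  have [M2 [_ HM2]] := Hc _ (nbhsx_ballx xi _ eta0).
  pose t := - `|T| - `|M2| - 1.
  have a1 := ler_norm T; have a2 := ler_norm (- T); have a3 := ler_norm M2;
  have a4 := ler_norm (- M2); rewrite !normrN in a2 a4.
  have t1 : t <= T by rewrite /t; lra.
  have t2 : t < M2 by rewrite /t; lra.
  exact: (fin t T (Hsmall _ t (HM2 t t2)) (gmono t t1)).
- rewrite leNgt; apply/negP => Dpos.
  have [del del0 Hdel] := loc_pos Dc Dpos.
  have [M [_ HM]] := Hc _ (nbhsx_ballx xi del del0).
  have dpos : forall t, M < t ->
      0 < (x t 0 i - x t 0 j) * (f (x t) 0 i - f (x t) 0 j).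
    move=> t tM; have [z [Bz E]] := Hloc del t (HM t tM).
    have Dz := Hdel z Bz; have := sq t; rewrite E; nra.
  pose T := M + 1.
  have gmono : forall t, T <= t -> (x T 0 i - x T 0 j) * (x T 0 i - x T 0 j)
                                <= (x t 0 i - x t 0 j) * (x t 0 i - x t 0 j).
    move=> t tT; have [z [zb E]] := MVT2 Hg T t.
    have zM : M < z by move: zb tT; rewrite /T; case=> /andP [? ?] ?; lra.
    have := dpos z zM; move: E => /= E; nra.
  have eta0 : 0 < `|x T 0 i - x T 0 j| / 2 by rewrite divr_gt0 // normr_gt0 dn0.
  have [M2 [_ HM2]] := Hc _ (nbhsx_ballx xi _ eta0).
  pose t := `|T| + `|M2| + 1.
  have a1 := ler_norm T; have a2 := ler_norm (- T); have a3 := ler_norm M2;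
  have a4 := ler_norm (- M2); rewrite !normrN in a2 a4.
  have t1 : T <= t by rewrite /t; lra.
  have t2 : M2 < t by rewrite /t; lra.
  exact: (fin t T (Hsmall _ t (HM2 t t2)) (gmono t t1)).
Qed.
Theorem mainTheorem2 (E : {set {set 'I_3}}) (F : R -> R)
  (G : forall A : {set 'I_3}, R -> 'rV[R]_#|A| -> R) :
  undirected_hypergraph E ->
  smooth1 F ->
  (forall A, A \in E ->
     [/\ smooth2 (G A), tail_symmetric (G A) & tail_nontrivial (G A)]) ->
  ~ field_cycle (netvf E F G).
Proof.
move=> _ HF HG [i [j [xi [xi2 [nij [invD [invSi [invSj [_ [Dxi [_ [eq1 [hyp1
  [_ [_ [het1 het2]]]]]]]]]]]]]]]].
have TS : forall A, A \in E -> tail_symmetric (G A) by move=> A /HG [].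
have HS2 : forall A, A \in E -> smooth2 (G A) by move=> A /HG [].
have C : forall l, C1 (fun x => (netvf E F G x 0 l : R^o)).
  by move=> l; exact: C1_netvf.
have nji : j != i by rewrite eq_sym.
have [k nik njk] : exists2 k : 'I_3, i != k & j != k.
  have hi := ltn_ord i; have hj := ltn_ord j.
  have nij' : (i : nat) != j by rewrite (inj_eq val_inj).
  have lt : (3 - i - j < 3)%N by lia.
  by exists (inord (3 - i - j)); rewrite -(inj_eq val_inj) /= inordK //; lia.
have HDij : forall x, Delta x -> netvf E F G x 0 i = netvf E F G x 0 j.
  by move=> x /invD /Delta_all H; rewrite H [RHS]H.
have HDji : forall x, Delta x -> netvf E F G x 0 j = netvf E F G x 0 i.
  by move=> x /HDij ->.
have HSj : forall x, Ssub j x -> netvf E F G x 0 i = netvf E F G x 0 k.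
  by move=> x /invSj H; apply: H => //; rewrite eq_sym.
have HSi : forall x, Ssub i x -> netvf E F G x 0 j = netvf E F G x 0 k.
  by move=> x /invSi H; apply: H => //; rewrite eq_sym.
have Hk : forall u v, netvf E F G (pt k v u) 0 i = netvf E F G (pt k v u) 0 j.
  move=> u v.
  have := @I2f E F G i j k u v TS nij njk nik.
  rewrite (HSj _ (@pt_Ssub j v u)) (HSi _ (@pt_Ssub i v u)); lra.
set a := xi 0 0.
have Hxi : forall m, xi 0 m = a by exact: Delta_all.
have ptE : forall (m : 'I_3) (h : R), h *: unitv m + xi = pt m (h + a) a.
  move=> m h; apply/rowP => p; rewrite !mxE Hxi ?eqxx /=.
  by case: (eqVneq p m) => _; rewrite ?mulr1 ?mulr0 ?add0r.
have xi0 : forall l, (fun x => (netvf E F G x 0 i : R^o) - netvf E F G x 0 j) xi = 0.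
  by move=> l /=; rewrite HDij ?subrr.
have dB : forall l1 l2 m : 'I_3,
    'D_(unitv m) (fun x => (netvf E F G x 0 l1 : R^o) - netvf E F G x 0 l2) xi =
    'D_(unitv m) (fun x => (netvf E F G x 0 l1 : R^o)) xi
    - 'D_(unitv m) (fun x => (netvf E F G x 0 l2 : R^o)) xi.
  move=> l1 l2 m; exact: (deriveB ((C l1).1 xi m) ((C l2).1 xi m)).
have Leq : 'D_(unitv i) (fun x => (netvf E F G x 0 i : R^o)) xi
           - 'D_(unitv i) (fun x => (netvf E F G x 0 j : R^o)) xi =
           'D_(unitv j) (fun x => (netvf E F G x 0 j : R^o)) xi
           - 'D_(unitv j) (fun x => (netvf E F G x 0 i : R^o)) xi.
  rewrite -!dB.
  have H3 : forall h : R,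
     (fun x => (netvf E F G x 0 i : R^o) - netvf E F G x 0 j) (h *: unitv i + xi)
     - (fun x => (netvf E F G x 0 i : R^o) - netvf E F G x 0 j) xi =
     (fun x => (netvf E F G x 0 j : R^o) - netvf E F G x 0 i) (h *: unitv j + xi)
     - (fun x => (netvf E F G x 0 j : R^o) - netvf E F G x 0 i) xi.
    move=> h /=; rewrite !ptE (HDij xi Dxi) !subrr !subr0.
    have := @I3f E F G i j k (h + a) a TS nij njk nik.
    rewrite Hk (HDij _ (@pt_Delta i a)); lra.
  by have [_ Q] := @quot_eq _ _ (fun x => (netvf E F G x 0 i : R^o) - netvf E F G x 0 j)
    (fun x => (netvf E F G x 0 j : R^o) - netvf E F G x 0 i) xi (unitv i) xi (unitv j) H3.
have Dk0 : 'D_(unitv k) (fun x => (netvf E F G x 0 i : R^o)) xi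
           - 'D_(unitv k) (fun x => (netvf E F G x 0 j : R^o)) xi = 0.
  rewrite -dB.
  have H4 : forall h : R,
     (fun x => (netvf E F G x 0 i : R^o) - netvf E F G x 0 j) (h *: unitv k + xi)
     - (fun x => (netvf E F G x 0 i : R^o) - netvf E F G x 0 j) xi =
     (fun _ : 'rV[R]_3 => (0 : R^o)) (h *: unitv k + xi) - (fun _ : 'rV[R]_3 => (0 : R^o)) xi.
    by move=> h /=; rewrite ptE Hk (HDij xi Dxi) !subrr.
  have [_ ->] := @quot_eq _ _ (fun x => (netvf E F G x 0 i : R^o) - netvf E F G x 0 j)
    (fun _ : 'rV[R]_3 => (0 : R^o)) xi (unitv k) xi (unitv k) H4; exact: derive_cst.
set lam := 'D_(unitv i) (fun x => (netvf E F G x 0 i : R^o)) xi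
           - 'D_(unitv i) (fun x => (netvf E F G x 0 j : R^o)) xi.
set w : 'rV[R]_3 := unitv i - unitv j.
have e1 := negbTE nij; have e2 := negbTE nji; have e3 := negbTE njk.
have e5 := negbTE nik.
have e4 : (k == j) = false by rewrite eq_sym.
have e6 : (k == i) = false by rewrite eq_sym.
have wJ : w *m Defs.jacobian (netvf E F G) xi = lam *: w.
  apply/rowP => m.
  rewrite /w mulmxBl /unitv -!rowE !mxE.
  case: (all3 m nij njk nik) => ->; rewrite ?eqxx ?e1 ?e2 ?e3 ?e4 ?e5 ?e6 /=.
  - by rewrite /lam; lra.
  - by rewrite /lam; move: Leq; lra.
  - by move: Dk0; lra.
have eig : eigenvalue (map_mx (fun r : R => complex.Complex r 0)
                         (Defs.jacobian (netvf E F G) xi)) (complex.Complex lam 0).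
  apply/eigenvalueP; exists (map_mx (complex.real_complex R) w).
    change (map_mx (complex.real_complex R) w *m
            map_mx (complex.real_complex R) (Defs.jacobian (netvf E F G) xi) =
            (complex.real_complex R lam) *: map_mx (complex.real_complex R) w).
    by rewrite -map_mxM wJ map_mxZ.
  apply/negP => /eqP /rowP /(_ i); rewrite !mxE eqxx e1 /= subr0.
  rewrite eqxx => /(congr1 (@complex.Re R)) /= /eqP; by rewrite oner_eq0.
have lam0 : lam != 0 by apply/eqP; exact: (hyp1 _ eig).
case: het1 => x1 [dx1 [c1 [_ S1]]].
case: het2 => x2 [dx2 [_ [c2 S2]]].
have [D1 _] := dyn_inf nij (C i) (C j) HDij Hxi dx1 S1.
have [_ D2] := dyn_inf nji (C j) (C i) HDji Hxi dx2 S2.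
have L1 := D1 c1; have L2 := D2 c2.
move: lam0; rewrite /lam => /eqP; move: L1 L2 Leq; lra.
Qed.
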